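(* For every state $\rho$ on a finite-dimensional bipartite Hilbert space $\mathcal{H}_A\otimes\mathcal{H}_B$, $$E_{\max}(\rho)=\log\bigl(1+R_g(\rho)\bigr),$$ i.e. the max-relative entropy of entanglement equals the global log robustness of entanglement.
   Context: Logarithms are base 2. $\mathcal{D}$ denotes the set of states and $\mathcal{S}\subset\mathcal{D}$ the set of separable states on $\mathcal{H}_A\otimes\mathcal{H}_B$. For a state $\rho$ and positive operator $\sigma$, $D_{\max}(\rho\|\sigma):=\log\min\{\lambda:\rho\le\lambda\sigma\}$, and $E_{\max}(\rho):=\min_{\sigma\in\mathcal{S}}D_{\max}(\rho\|\sigma)$. The global robustness of entanglement is $R_g(\rho):=\min\{s\ge0:\exists\,\omega\in\mathcal{D}\text{ such that }\tfrac{1}{1+s}\rho+\tfrac{s}{1+s}\omega\in\mathcal{S}\}$. *)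

(* Defs.v *)
From HB Require Import structures.
From mathcomp Require Import all_boot all_order all_algebra.
From mathcomp Require Import complex mxtens.
From mathcomp Require Import boolp classical_sets reals constructive_ereal ereal exp.
Set Implicit Arguments. Unset Strict Implicit. Unset Printing Implicit Defensive.
Import Order.TTheory GRing.Theory Num.Theory.
Local Open Scope ring_scope.
Local Open Scope classical_set_scope.

Section QDefs.
Variable R : realType.
Local Notation C := R[i].

Definition log2 (x : R) : R := ln x / ln 2.

Definition rc (x : R) : C := (x%:C)%C.

Definition adjmx m n (A : 'M[C]_(m, n)) : 'M[C]_(n, m) := (map_mx Num.conj A)^T.

Definition hermitian n (A : 'M[C]_n) : Prop := adjmx A = A.

Definition psd n (A : 'M[C]_n) : Prop :=
  hermitian A /\ forall v : 'cV[C]_n, 0 <= (adjmx v *m A *m v) 0 0.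

Definition loewner_le n (A B : 'M[C]_n) : Prop := psd (B - A).

Definition state n (rho : 'M[C]_n) : Prop := psd rho /\ \tr rho = 1.

Definition separable dA dB (sigma : 'M[C]_(dA * dB)) : Prop :=
  exists (k : nat) (p : 'I_k -> R) (a : 'I_k -> 'M[C]_dA) (b : 'I_k -> 'M[C]_dB),
    [/\ forall i, 0 <= p i,
        \sum_(i < k) p i = 1,
        forall i, state (a i),
        forall i, state (b i) &
        sigma = \sum_(i < k) rc (p i) *: (a i *t b i)].

(* D_max(rho || sigma) = log min { lambda : rho <= lambda sigma }
   (+oo if no such lambda exists) *)
Definition Dmax n (rho sigma : 'M[C]_n) : \bar R :=
  ereal_inf [set (log2 l)%:E | l in [set l : R | 0 < l /\ loewner_le rho (rc l *: sigma)]].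

Definition Emax dA dB (rho : 'M[C]_(dA * dB)) : \bar R :=
  ereal_inf [set Dmax rho sigma | sigma in [set sigma | @separable dA dB sigma]].

Definition Rg dA dB (rho : 'M[C]_(dA * dB)) : R :=
  inf [set s : R | 0 <= s /\
        exists omega : 'M[C]_(dA * dB), state omega /\
          @separable dA dB (rc (1 + s)^-1 *: rho + rc (s / (1 + s)) *: omega)].

End QDefs.

(* Main.v *)
Require Import Defs.
From HB Require Import structures.
From mathcomp Require Import all_boot all_order all_algebra.
From mathcomp Require Import complex mxtens.
From mathcomp Require Import boolp classical_sets reals constructive_ereal ereal exp.
From mathcomp Require Import sequences.
Import Order.TTheory GRing.Theory Num.Theory.
Local Open Scope ring_scope.
Set Implicit Arguments. Unset Strict Implicit.
Section S.
Variable R : realType.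
Local Notation C := R[i].
Local Open Scope classical_set_scope.
Lemma rc1 : rc 1 = 1 :> C. Proof. by rewrite /rc rmorph1. Qed.
Lemma rc0 : rc 0 = 0 :> C. Proof. by rewrite /rc rmorph0. Qed.
Lemma rcM (x y : R) : rc (x * y) = rc x * rc y. Proof. by rewrite /rc rmorphM. Qed.
Lemma rcD (x y : R) : rc (x + y) = rc x + rc y. Proof. by rewrite /rc rmorphD. Qed.
Lemma rcB (x y : R) : rc (x - y) = rc x - rc y. Proof. by rewrite /rc rmorphB. Qed.
Lemma rcV (x : R) : rc (x^-1) = (rc x)^-1. Proof. by rewrite /rc fmorphV. Qed.
Lemma rc_conj (x : R) : Num.conj (rc x) = rc x.
Proof. exact: conjc_real. Qed.
Lemma rc_ge0 (x : R) : (0 <= rc x) = (0 <= x). Proof. exact: ler0c. Qed.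
Lemma rc_le (x y : R) : (rc x <= rc y) = (x <= y). Proof. exact: lecR. Qed.

Definition qf n (A : 'M[C]_n) (v : 'cV[C]_n) := (adjmx v *m A *m v) 0 0.

Lemma adjmxD m n (A B : 'M[C]_(m,n)) : adjmx (A + B) = adjmx A + adjmx B.
Proof. by apply/matrixP=> i j; rewrite !mxE rmorphD. Qed.
Lemma adjmxN m n (A : 'M[C]_(m,n)) : adjmx (- A) = - adjmx A.
Proof. by apply/matrixP=> i j; rewrite !mxE rmorphN. Qed.
Lemma adjmxB m n (A B : 'M[C]_(m,n)) : adjmx (A - B) = adjmx A - adjmx B.
Proof. by rewrite adjmxD adjmxN. Qed.
Lemma adjmxZ m n (c : C) (A : 'M[C]_(m,n)) : adjmx (c *: A) = Num.conj c *: adjmx A.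
Proof. by apply/matrixP=> i j; rewrite !mxE rmorphM. Qed.
Lemma adjmx1 n : adjmx (1%:M : 'M[C]_n) = 1%:M.
Proof. by apply/matrixP=> i j; rewrite !mxE eq_sym; case: (j == i); rewrite ?conjC_nat. Qed.
Lemma adjmx_delta m n (i : 'I_m) (j : 'I_n) : adjmx (delta_mx i j : 'M[C]_(m,n)) = delta_mx j i.
Proof. by apply/matrixP=> k l; rewrite !mxE andbC conjC_nat. Qed.

Lemma qfD n (A B : 'M[C]_n) v : qf (A + B) v = qf A v + qf B v.
Proof. by rewrite /qf mulmxDr mulmxDl mxE. Qed.
Lemma qfN n (A : 'M[C]_n) v : qf (- A) v = - qf A v.
Proof. by rewrite /qf mulmxN mulNmx mxE. Qed.
Lemma qfZ n (c : C) (A : 'M[C]_n) v : qf (c *: A) v = c * qf A v.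
Proof. by rewrite /qf -scalemxAr -scalemxAl mxE. Qed.

Lemma psdD n (A B : 'M[C]_n) : psd A -> psd B -> psd (A + B).
Proof.
move=> [hA qA] [hB qB]; split; first by rewrite /Defs.hermitian adjmxD hA hB.
by move=> v; rewrite -/(qf _ _) qfD; exact: addr_ge0 (qA v) (qB v).
Qed.
Lemma psdZ n (c : R) (A : 'M[C]_n) : 0 <= c -> psd A -> psd (rc c *: A).
Proof.
move=> c0 [hA qA]; split; first by rewrite /Defs.hermitian adjmxZ rc_conj hA.
by move=> v; rewrite -/(qf _ _) qfZ; apply: mulr_ge0 (qA v); rewrite rc_ge0.
Qed.

Lemma qf_delta n (M : 'M[C]_n) i j :
  (adjmx (delta_mx i 0 : 'cV[C]_n) *m M *m (delta_mx j 0 : 'cV[C]_n)) 0 0 = M i j.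
Proof. by rewrite adjmx_delta -rowE -colE !mxE. Qed.

Lemma psd_diag n (M : 'M[C]_n) i : psd M -> 0 <= M i i.
Proof. by case=> _ /(_ (delta_mx i 0)); rewrite qf_delta. Qed.

Lemma psd_tr n (M : 'M[C]_n) : psd M -> 0 <= \tr M.
Proof. by move=> pM; rewrite /mxtrace sumr_ge0 // => i _; apply: psd_diag. Qed.

Lemma delta_prod n (M : 'M[C]_n) i j :
  (delta_mx 0 i : 'rV[C]_n) *m M *m (delta_mx j 0 : 'cV[C]_n) = (M i j)%:M.
Proof.
apply/matrixP=> a b; rewrite [a]ord1 [b]ord1 -(qf_delta M i j) adjmx_delta.
by rewrite !mxE.
Qed.

Lemma herm_conj n (M : 'M[C]_n) i j : Defs.hermitian M -> M j i = Num.conj (M i j).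
Proof. by move=> hM; rewrite -{1}hM !mxE. Qed.

Lemma psd_tr0 n (M : 'M[C]_n) : psd M -> \tr M = 0 -> M = 0.
Proof.
move=> pM tr0.
have dg i : M i i = 0.
  by apply: (psumr_eq0P _ tr0) => // k _; apply: psd_diag.
case: (pM) => hM qM.
apply/matrixP=> i j; rewrite mxE.
pose t := - Num.conj (M i j).
have := qM (delta_mx i 0 + t *: delta_mx j 0).
rewrite adjmxD adjmxZ !adjmx_delta !mulmxDl !mulmxDr -!scalemxAl -!scalemxAr.
rewrite !delta_prod !mxE !eqxx !mulr1n !dg (herm_conj i j hM) !mulr0 !addr0 add0r.
have ct : Num.conj t = - M i j by rewrite /t raddfN /= conjCK.
rewrite ct /t !mulNr -opprD oppr_ge0 -normCKC -normCK -mulr2n.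
rewrite pmulrn_lle0 // => h.
have : `|M i j| ^+ 2 == 0 by rewrite eq_le h exprn_ge0.
by rewrite expf_eq0 /= normr_eq0 => /eqP.
Qed.

Lemma tr_tens m n (A : 'M[C]_m) (B : 'M[C]_n) : \tr (A *t B) = \tr A * \tr B.
Proof.
rewrite /mxtrace.
rewrite (reindex (@mxtens_index m n)) /=; last first.
  by exists (@mxtens_unindex m n) => x _; [apply: mxtens_indexK | apply: mxtens_unindexK].
rewrite (eq_bigr (fun p => A p.1 p.1 * B p.2 p.2)); last by move=> p _; rewrite [p]surjective_pairing tensmxE.
rewrite -(pair_big xpredT xpredT (fun i j => A i i * B j j)) /=.
by rewrite mulr_suml; apply: eq_bigr => i _; rewrite mulr_sumr.
Qed.

Lemma sep_tr dA dB (s : 'M[C]_(dA * dB)) : separable s -> \tr s = 1.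
Proof.
case=> k [p [a [b [p0 p1 sa sb ->]]]].
rewrite raddf_sum /=.
under eq_bigr do rewrite mxtraceZ tr_tens (proj2 (sa _)) (proj2 (sb _)) mulr1.
under eq_bigr do rewrite mulr1.
by rewrite /rc -rmorph_sum p1 rmorph1.
Qed.

Lemma tens_scal m n (x y : C) : (x%:M : 'M_m) *t (y%:M : 'M_n) = (x * y)%:M.
Proof.
apply/matrixP=> I J.
case: (mxtens_indexP I)=> i0 i1; case: (mxtens_indexP J)=> j0 j1.
rewrite tensmxE !mxE.
have -> : (mxtens_index (i0, i1) == mxtens_index (j0, j1)) = (i0 == j0) && (i1 == j1).
  apply/eqP/andP => [/(can_inj (@mxtens_indexK m n)) [-> ->] | [/eqP -> /eqP ->]] //.
by case: (i0 == j0); case: (i1 == j1); rewrite /= ?mulr1n ?mulr0n ?mulr0 ?mul0r.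
Qed.

Lemma qfE n (A : 'M[C]_n) v :
  qf A v = \sum_j \sum_i Num.conj (v i 0) * A i j * v j 0.
Proof.
rewrite /qf mxE; apply: eq_bigr => j _; rewrite mxE mulr_suml.
by apply: eq_bigr => i _; rewrite !mxE.
Qed.

Lemma qf1 n (v : 'cV[C]_n) : qf 1%:M v = \sum_i `|v i 0| ^+ 2.
Proof.
rewrite /qf mulmx1 mxE; apply: eq_bigr => i _; by rewrite !mxE normCKC.
Qed.

Lemma psd1 n : psd (1%:M : 'M[C]_n).
Proof.
split; first exact: adjmx1.
by move=> v; rewrite -/(qf _ _) qf1 sumr_ge0 // => i _; rewrite exprn_ge0.
Qed.

Lemma state_unif m : (0 < m)%N -> state (rc (m%:R^-1) *: (1%:M : 'M[C]_m)).
Proof.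
move=> m0; split; first by apply: psdZ; [rewrite invr_ge0 ler0n | exact: psd1].
rewrite mxtraceZ mxtrace1 rcV /rc rmorph_nat mulVf //.
by rewrite pnatr_eq0 -lt0n.
Qed.

Lemma le_sum1 n (F : 'I_n -> C) i : (forall j, 0 <= F j) -> F i <= \sum_j F j.
Proof. by move=> F0; rewrite (bigD1 i) //= lerDl sumr_ge0. Qed.

Lemma amgm (a b : C) : 0 <= a -> 0 <= b -> a * b <= a ^+ 2 + b ^+ 2.
Proof.
move=> a0 b0.
have [ab|ba] := real_leP (ger0_real a0) (ger0_real b0).
  by rewrite expr2 (le_trans (ler_wpM2r b0 ab)) // lerDr mulr_ge0.
by rewrite [b ^+ 2]expr2 (le_trans (ler_wpM2l a0 (ltW ba))) // lerDl mulr_ge0.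
Qed.

Lemma psd_bound n (rho : 'M[C]_n) : psd rho ->
  exists c : R, 1 <= c /\ psd (rc c *: 1%:M - rho).
Proof.
move=> [hr qr].
pose Kc := \sum_j \sum_i `|rho i j|.
have K0 : 0 <= Kc by rewrite sumr_ge0 // => j _; rewrite sumr_ge0.
have KR : rc (complex.Re Kc) = Kc by rewrite /rc RRe_real // ger0_real.
exists (2 * complex.Re Kc + 1); split.
  by rewrite lerDr mulr_ge0 // -rc_ge0 KR.
split.
  by rewrite /Defs.hermitian adjmxB adjmxZ rc_conj adjmx1 hr.
move=> v; rewrite -/(qf _ _) qfD qfN qfZ qf1 subr_ge0.
set N := \sum_i _.
have N0 : 0 <= N by rewrite sumr_ge0 // => i _; rewrite exprn_ge0.
have q0 := qr v; rewrite -/(qf _ _) in q0.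
rewrite -(ger0_norm q0) qfE.
apply: (le_trans (ler_norm_sum _ _ _)).
apply: (@le_trans _ _ (\sum_j \sum_i `|rho i j| * (2 * N))).
  apply: ler_sum => j _; apply: (le_trans (ler_norm_sum _ _ _)).
  apply: ler_sum => i _.
  rewrite !normrM normcJ mulrAC.
  rewrite [X in _ <= X]mulrC; apply: ler_wpM2r => //.
  apply: (le_trans (amgm _ _)) => //.
  by rewrite mulr2n mulrDl mul1r lerD // le_sum1 // => k; rewrite exprn_ge0.
rewrite (eq_bigr (fun j => (\sum_i `|rho i j|) * (2*N))); last by move=> j _; rewrite mulr_suml.
rewrite -mulr_suml -/Kc rcD rcM KR rc1 /rc rmorph_nat.
have -> : (2 * Kc + 1) * N = Kc * (2 * N) + N by rewrite mulrDl mul1r -mulrA mulrCA.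
by rewrite lerDl.
Qed.

Definition Sset dA dB (rho : 'M[C]_(dA * dB)) := [set s : R | 0 <= s /\
        exists omega : 'M[C]_(dA * dB), state omega /\
          @separable R dA dB (rc (1 + s)^-1 *: rho + rc (s / (1 + s)) *: omega)].

Lemma RgE dA dB (rho : 'M[C]_(dA * dB)) : Rg rho = inf (Sset rho).
Proof. by []. Qed.

Lemma keyA dA dB (rho sigma : 'M[C]_(dA * dB)) (l : R) :
  state rho -> separable sigma -> 0 < l -> loewner_le rho (rc l *: sigma) ->
  Sset rho (l - 1).
Proof.
move=> [pr tr1] sep l0 le.
have trM : \tr (rc l *: sigma - rho) = rc (l - 1).
  by rewrite raddfB /= mxtraceZ (sep_tr sep) tr1 mulr1 rcB rc1.
have l1 : 1 <= l.
  by rewrite -subr_ge0 -rc_ge0 -trM psd_tr.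
case: (ltrP 1 l) => [l1' | l1']; last first.
  have /eqP l1e : l == 1 by rewrite eq_le l1' l1.
  rewrite l1e in le trM *.
  have := psd_tr0 le; rewrite trM subrr rc0 => /(_ erefl) /eqP.
  rewrite rc1 scale1r subr_eq0 => /eqP es.
  split => //; exists rho; split => //.
  by rewrite addr0 invr1 mul0r rc1 rc0 scale1r scale0r addr0 -es.
have l10 : l - 1 != 0 by rewrite subr_eq0 gt_eqF.
have lnz : l != 0 by rewrite gt_eqF.
split; first by rewrite subr_ge0 ltW.
exists (rc ((l - 1)^-1) *: (rc l *: sigma - rho)); split.
  split; first by apply: psdZ => //; rewrite invr_ge0 subr_ge0 ltW.
  by rewrite mxtraceZ trM -rcM mulVf // rc1.
have -> : 1 + (l - 1) = l by rewrite addrCA subrr addr0.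
rewrite scalerA -rcM mulrAC mulfV // mul1r scalerBr scalerA -rcM mulVf //.
by rewrite rc1 scale1r addrC subrK.
Qed.

Lemma keyB dA dB (rho : 'M[C]_(dA * dB)) (s : R) :
  Sset rho s -> exists sigma, separable sigma /\ 0 < 1 + s /\
     loewner_le rho (rc (1 + s) *: sigma).
Proof.
move=> [s0 [om [[pom _] sep]]].
have s1 : 0 < 1 + s by rewrite ltr_wpDr.
exists (rc (1 + s)^-1 *: rho + rc (s / (1 + s)) *: om); split => //; split => //.
rewrite /loewner_le scalerDr !scalerA -!rcM mulfV ?gt_eqF // mulrCA mulfV ?gt_eqF //.
by rewrite mulr1 rc1 scale1r addrAC subrr add0r; apply: psdZ.
Qed.

Lemma state_dim n (rho : 'M[C]_n) : state rho -> (0 < n)%N.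
Proof.
case: n rho => // rho [_]; rewrite /mxtrace big_ord0 => /eqP.
by rewrite eq_sym oner_eq0.
Qed.

Lemma keyC dA dB (rho : 'M[C]_(dA * dB)) : state rho -> exists s, Sset rho s.
Proof.
move=> st; have d0 := state_dim st.
have dA0 : (0 < dA)%N by move: d0; rewrite muln_gt0 => /andP[].
have dB0 : (0 < dB)%N by move: d0; rewrite muln_gt0 => /andP[].
have [c [c1 pc]] := psd_bound (proj1 st).
pose a : 'M[C]_dA := rc (dA%:R^-1) *: 1%:M.
pose b : 'M[C]_dB := rc (dB%:R^-1) *: 1%:M.
have sep : separable (a *t b).
  exists 1%N, (fun _ => 1), (fun _ => a), (fun _ => b); split.
  - by move=> _; rewrite ler01.
  - by rewrite big_ord1.
  - by move=> _; apply: state_unif.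
  - by move=> _; apply: state_unif.
  - by rewrite big_ord1 rc1 scale1r.
have dnz : (dA * dB)%:R != 0 :> R by rewrite pnatr_eq0 -lt0n.
have l0 : 0 < c * (dA * dB)%:R by rewrite mulr_gt0 ?ltr0n // (lt_le_trans ltr01).
exists (c * (dA * dB)%:R - 1).
apply: (keyA st sep l0).
rewrite /loewner_le /a /b !scalemx1 tens_scal scale_scalar_mx -!rcM.
have -> : c * (dA * dB)%:R * (dA%:R^-1 / dB%:R) = c.
  by rewrite -mulrA -invfM -natrM mulfV ?mulr1.
by rewrite -scalemx1.

Qed.

End S.

Unset Implicit Arguments. Set Strict Implicit.
Theorem lemma5 (R : realType) (dA dB : nat) (rho : 'M[R[i]]_(dA * dB)) :
  state rho -> Emax rho = (log2 (1 + Rg rho))%:E.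
Proof.
move=> st.
have nS : (Sset rho !=set0)%classic by have [s Ss] := keyC st; exists s.
have lbS : has_lbound (Sset rho) by exists 0 => s [].
have a0 : 0 <= Rg rho by rewrite RgE; apply: lb_le_inf => // s [].
have a1 : 0 < 1 + Rg rho by rewrite ltr_wpDr.
have ln2 : 0 < ln (2 : R) by rewrite ln_gt0 // ltr1n.
apply/le_anti/andP; split.
- apply/lee_addgt0Pr => e e0.
  rewrite -EFinD.
  set x := log2 (1 + Rg rho) + e.
  have hx : 1 + Rg rho < expR (x * ln 2).
    rewrite -[X in X < _]lnK ?posrE // ltr_expR /x mulrDl /log2 divfK ?gt_eqF //.
    by rewrite ltrDl mulr_gt0.
  have [s Ss ltS] : exists2 s, Sset rho s & s < expR (x * ln 2) - 1.
    by apply: inf_lt => //; rewrite -RgE ltrBrDr addrC.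
  have [sig [sep [s1 le]]] := keyB Ss.
  apply: (@le_trans _ _ (Dmax rho sig)).
    by apply: ereal_inf_lbound; exists sig.
  apply: (@le_trans _ _ (log2 (1 + s))%:E).
    by apply: ereal_inf_lbound; exists (1 + s).
  rewrite lee_fin /log2 ler_pdivrMr //.
  rewrite -(expRK (x * ln 2)) ltW // ltr_ln ?posrE ?expR_gt0 //.
  by rewrite -ltrBrDl.
- apply: le_ereal_inf_tmp => z [sig sep <-].
  apply: le_ereal_inf_tmp => w [l [l0 le] <-].
  rewrite lee_fin /log2 ler_pM2r ?invr_gt0 // ler_ln ?posrE //.
  have := ge_inf lbS (keyA st sep l0 le).
  by rewrite -RgE lerBrDl addrC.
Qed.
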